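(* Let $M,N$ be matroids on a common set $E$, let $I$ be independent in both $M$ and $N$, let $W:=W(M/I,N/I)$ and let $B\in B(M/I,N/I,W)$. Then $I\cup B$ is a nice feasible set with respect to $(M,N)$.
   Context: Matroids are possibly infinite. $M^*$ dual, $M\upharpoonright X$ restriction, $M/X:=(M^*\upharpoonright(E\setminus X))^*$ (on $E\setminus X$), $M.X:=M/(E\setminus X)$. A loop is an element $e$ with $\{e\}$ dependent; $r(K)=0$ means the empty set is a base of $K$. $W$ is an $(M,N)$-wave if $M\upharpoonright W$ has a base independent in $N.W$; the union of all waves is a wave, denoted $W(M,N)$. $B(M,N,X)$ is the set of common bases of $M\upharpoonright X$ and $N.X$. $\mathsf{cond}(M,N)$: for every $(M,N)$-wave $W$, $N.W$ has an $M$-independent base. $\mathsf{cond}^+(M,N)$: $W(M,N)$ consists of $M$-loops and $r(N.W(M,N))=0$. A set $I$ independent in both $M$ and $N$ is feasible if $\mathsf{cond}(M/I,N/I)$ holds, and nice feasible if moreover $\mathsf{cond}^+(M/I,N/I)$ holds. *)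

(* Defs.v *)
(* Possibly infinite matroids, given by independence axioms
   (Bruhn–Diestel–Kriesell–Pendavingh–Wollan).  Subsets of a type T are
   predicates T -> Prop. *)

Definition set (T : Type) := T -> Prop.

Section Sets.
Context {T : Type}.
Definition subset (A B : set T) : Prop := forall x, A x -> B x.
Definition set0 : set T := fun _ => False.
Definition set1 (a : T) : set T := fun x => x = a.
Definition setU (A B : set T) : set T := fun x => A x \/ B x.
Definition setI (A B : set T) : set T := fun x => A x /\ B x.
Definition setD (A B : set T) : set T := fun x => A x /\ ~ B x.
End Sets.

Record mdata (T : Type) := MData { ground : set T ; indep : set T -> Prop }.
Arguments MData {T} _ _.
Arguments ground {T} _ _.
Arguments indep {T} _ _.

Section Matroids.
Context {T : Type}.
Implicit Types (M N : mdata T) (X I J B W : set T).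

Definition base M B : Prop :=
  indep M B /\ forall J, indep M J -> subset B J -> subset J B.

Definition is_matroid M : Prop :=
  (forall I, indep M I -> subset I (ground M)) /\
  indep M set0 /\
  (forall I J, indep M J -> subset I J -> indep M I) /\
  (forall I B, indep M I -> ~ base M I -> base M B ->
     exists x, B x /\ ~ I x /\ indep M (setU I (set1 x))) /\
  (forall I X, indep M I -> subset I X -> subset X (ground M) ->
     exists J, indep M J /\ subset I J /\ subset J X /\
       forall J', indep M J' -> subset J J' -> subset J' X -> subset J' J).

(* dual: bases of M^* are the complements of bases of M *)
Definition dual M : mdata T :=
  MData (ground M)
        (fun I => subset I (ground M) /\
                  exists B, base M B /\ forall x, I x -> ~ B x).

Definition restrict M X : mdata T :=
  MData (setI (ground M) X) (fun I => indep M I /\ subset I X).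

Definition contract M X : mdata T :=
  dual (restrict (dual M) (setD (ground M) X)).

(* M.X := M/(E \ X) *)
Definition contract_to M X : mdata T := contract M (setD (ground M) X).

Definition loop M (e : T) : Prop := ground M e /\ ~ indep M (set1 e).

(* r(K) = 0 : the empty set is a base of K *)
Definition rank_zero M : Prop := base M set0.

Definition wave M N W : Prop :=
  subset W (ground M) /\
  exists B, base (restrict M W) B /\ indep (contract_to N W) B.

Definition wave_union M N : set T := fun x => exists W, wave M N W /\ W x.

Definition common_bases M N X (B : set T) : Prop :=
  base (restrict M X) B /\ base (contract_to N X) B.

Definition cond M N : Prop :=
  forall W, wave M N W -> exists B, base (contract_to N W) B /\ indep M B.

Definition cond_plus M N : Prop :=
  (forall x, wave_union M N x -> loop M x) /\
  rank_zero (contract_to N (wave_union M N)).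

Definition feasible M N I : Prop :=
  indep M I /\ indep N I /\ cond (contract M I) (contract N I).

Definition nice_feasible M N I : Prop :=
  feasible M N I /\ cond_plus (contract M I) (contract N I).

End Matroids.

(* Main.v *)
Require Import Defs.
From Stdlib Require Import Classical.

Ltac us := unfold subset, setU, setI, setD, set1, set0 in *.

Lemma m_ground {T} (M : mdata T) I : is_matroid M -> indep M I -> subset I (ground M).
Proof. intros [H _]; apply H. Qed.
Lemma m_empty {T} (M : mdata T) : is_matroid M -> indep M set0.
Proof. intros [_ [H _]]; exact H. Qed.
Lemma m_down {T} (M : mdata T) I J : is_matroid M -> indep M J -> subset I J -> indep M I.
Proof. intros [_ [_ [H _]]] H1 H2; exact (H I J H1 H2). Qed.
Lemma m_aug {T} (M : mdata T) I B : is_matroid M -> indep M I -> ~ base M I -> base M B ->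
     exists x, B x /\ ~ I x /\ indep M (setU I (set1 x)).
Proof. intros [_ [_ [_ [H _]]]]; apply H. Qed.
Lemma m_max {T} (M : mdata T) I X : is_matroid M -> indep M I -> subset I X -> subset X (ground M) ->
     exists J, indep M J /\ subset I J /\ subset J X /\
       forall J', indep M J' -> subset J J' -> subset J' X -> subset J' J.
Proof. intros [_ [_ [_ [_ H]]]]; apply H. Qed.

Lemma base_restrict {T} (M : mdata T) X B :
  base (restrict M X) B <-> (indep M B /\ subset B X /\
     forall J, indep M J -> subset J X -> subset B J -> subset J B).
Proof.
  unfold base, restrict; simpl; split.
  - intros [[H1 H2] H3]; repeat split; auto.
  - intros [H1 [H2 H3]]; repeat split; auto. intros J [HJ1 HJ2]; auto.
Qed.

Lemma ext_restrict {T} (M : mdata T) I X : is_matroid M -> indep M I -> subset I X ->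
  exists BX, base (restrict M X) BX /\ subset I BX.
Proof.
  intros HM HI HIX.
  destruct (m_max M I (setI (ground M) X) HM HI) as [J [HJ [HIJ [HJX Hmax]]]].
  - pose proof (m_ground M I HM HI). us; auto.
  - us; tauto.
  - exists J; split; auto. apply base_restrict. repeat split; auto.
    + us; intros x Hx; apply HJX; auto.
    + intros K HK HKX HJK; apply Hmax; auto.
      pose proof (m_ground M K HM HK). us; auto.
Qed.

Lemma ext_base {T} (M : mdata T) I : is_matroid M -> indep M I ->
  exists C, base M C /\ subset I C.
Proof.
  intros HM HI.
  destruct (m_max M I (ground M) HM HI) as [J [HJ [HIJ [HJX Hmax]]]].
  - apply (m_ground M I HM HI).
  - us; auto.
  - exists J; split; auto. split; auto. intros K HK HJK. apply Hmax; auto.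
    apply (m_ground M K HM HK).
Qed.

Lemma self_base {T} (M : mdata T) I : is_matroid M -> indep M I -> base (restrict M I) I.
Proof.
  intros HM HI. apply base_restrict. repeat split; auto; us; auto.
Qed.

Lemma CHAR {T} (M : mdata T) X BX J : is_matroid M -> base (restrict M X) BX ->
  (indep (contract M X) J <->
     (subset J (ground M) /\ (forall x, J x -> ~ X x) /\ indep M (setU J BX))).
Proof.
  intros HM HBX. apply base_restrict in HBX. destruct HBX as [HBXi [HBXX HBXmax]].
  pose proof (m_ground M BX HM HBXi) as HBXE.
  unfold contract, dual, restrict; simpl. split.
  - intros [HJ [K [[[[HKE [C0 [HC0 HKC0]]] HKY] HKmax] HJK]]].
    destruct (m_max M BX (fun x => ground M x /\ ~ K x) HM HBXi) as [C [HC [HBXC [HCZ Hmax]]]].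
    { us. intros x Hx; split; auto. intros Kx. apply HKY in Kx. destruct Kx. auto. }
    { us; tauto. }
    assert (HCb : base M C).
    { apply NNPP; intro Hnb. destruct (m_aug M C C0 HM HC Hnb HC0) as [x [Hx1 [Hx2 Hx3]]].
      apply Hx2. assert (Hs : subset (setU C (set1 x)) C).
      { apply Hmax; auto. us; auto. us. intros y [Hy|Hy]; auto. subst y.
        split. exact (m_ground M C0 HM (proj1 HC0) x Hx1).
        intro; eapply HKC0; eauto. }
      apply Hs. us; auto. }
    assert (HJE : subset J (ground M)). { us. intros x Hx; apply HJ; auto. }
    assert (HJX : forall x, J x -> ~ X x). { us. intros x Hx; apply HJ; auto. }
    repeat split; auto.
    apply m_down with C; auto.
    us. intros x [Hx|Hx]; auto.
    destruct (classic (C x)) as [Cx|nCx]; auto. exfalso.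
    assert (Kx : K x).
    { apply (HKmax (setU K (set1 x))).
      - simpl. split; [split|].
        + us. intros y [Hy|Hy]; [auto| subst; auto].
        + exists C; split; auto. us. intros y [Hy|Hy]. intro Cy. apply HCZ in Cy. tauto.
          subst; auto.
        + us. intros y [Hy|Hy]; [auto| subst; auto].
      - us; auto.
      - us; auto. }
    eapply HJK; eauto.
  - intros [HJE [HJX HJi]].
    destruct (ext_base M _ HM HJi) as [C [HC HJC]].
    split.
    { us. intros x Hx; repeat split; auto. }
    exists (fun y => ground M y /\ ~ X y /\ ~ C y).
    split; [split|].
    + split; [split|].
      * us; tauto.
      * exists C; split; [auto|tauto].
      * us; tauto.
    + intros J' [[HJ'E [C' [HC' HJ'C']]] HJ'Y] HKJ' y Hy.
      assert (Ey : ground M y) by auto.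
      assert (nXy : ~ X y) by (apply HJ'Y in Hy; us; tauto).
      repeat split; auto. intro Cy.
      set (C1 := fun z => C z /\ z <> y).
      assert (HC1 : indep M C1) by (apply m_down with C; [auto|apply HC|us; unfold C1; tauto]).
      assert (Hnb : ~ base M C1).
      { intros [_ Hm]. assert (Hs : subset C C1) by (apply Hm; [apply HC| unfold C1; us; tauto]).
        apply Hs in Cy. unfold C1 in Cy. tauto. }
      destruct (m_aug M C1 C' HM HC1 Hnb HC') as [x [Hx1 [Hx2 Hx3]]].
      assert (Ex : ground M x) by (exact (m_ground M C' HM (proj1 HC') x Hx1)).
      assert (nJ'x : ~ J' x) by (intro; eapply HJ'C'; eauto).
      assert (Xx : X x).
      { apply NNPP; intro nXx. destruct (classic (C x)) as [Cx|nCx].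
        - apply Hx2. unfold C1; split; auto. intro; subst; auto.
        - apply nJ'x, HKJ'. auto. }
      assert (nBXx : ~ BX x).
      { intro Bx. apply Hx2. unfold C1; split. apply HJC; us; auto. intro; subst; auto. }
      apply nBXx. apply (HBXmax (setU BX (set1 x))).
      * apply m_down with (setU C1 (set1 x)); auto. us. intros z [Hz|Hz]; auto.
        left. unfold C1; split. apply HJC; us; auto. intro; subst. apply HBXX in Hz; auto.
      * us. intros z [Hz|Hz]; auto. subst; auto.
      * us; auto.
      * us; auto.
    + intros x Hx [_ [_ nCx]]. apply nCx, HJC. us; auto.
Qed.

Lemma gc {T} (M : mdata T) X x : ground (contract M X) x <-> (ground M x /\ ~ X x).
Proof. simpl; unfold setI, setD; tauto. Qed.

Lemma contract_sub {T} (M : mdata T) X I : indep (contract M X) I -> subset I (ground (contract M X)).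
Proof. intros [H _]; exact H. Qed.

Lemma base_contract {T} (M : mdata T) X BX B : is_matroid M -> base (restrict M X) BX ->
  base (contract M X) B -> base M (setU B BX).
Proof.
  intros HM HBX [HB Hmax].
  pose proof HBX as HBX'. apply base_restrict in HBX'. destruct HBX' as [HBXi [HBXX HBXm]].
  apply (CHAR M X BX B HM HBX) in HB. destruct HB as [HBE [HBX0 HBi]].
  split; auto. intros K HK HsK x Kx.
  destruct (classic (X x)) as [Xx|nXx].
  - right. apply (HBXm (fun y => K y /\ X y)); [ | us; tauto | | us; tauto].
    + apply m_down with K; auto. us; tauto.
    + us. intros y Hy; split; auto.
  - left. apply (Hmax (fun y => K y /\ ~ X y)); [ | | us; tauto].
    + apply (CHAR M X BX _ HM HBX). split; [|split].
      * us. intros y [Ky _]. exact (m_ground M K HM HK y Ky).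
      * us. tauto.
      * apply m_down with K; auto. us. intros y [[Ky _]|Hy]; auto.
    + us. intros y Hy; split; auto.
Qed.

Lemma contract_base_of {T} (M : mdata T) X BX I : is_matroid M -> base (restrict M X) BX ->
  indep (contract M X) I -> base M (setU I BX) -> base (contract M X) I.
Proof.
  intros HM HBX HI [_ Hm]. split; auto.
  intros J HJ HIJ x Jx.
  pose proof HJ as HJ'. apply (CHAR M X BX J HM HBX) in HJ'. destruct HJ' as [HJE [HJX HJi]].
  assert (H : setU I BX x). { apply (Hm (setU J BX)); auto. us. intros y [Hy|Hy]; auto. us; auto. }
  destruct H as [H|H]; auto. exfalso. apply base_restrict in HBX. destruct HBX as [_ [HBXX _]].
  apply (HJX x Jx). apply HBXX; auto.
Qed.

Lemma MATC {T} (M : mdata T) X : is_matroid M -> is_matroid (contract M X).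
Proof.
  intros HM.
  destruct (ext_restrict M set0 X HM (m_empty M HM)) as [BX [HBX _]]. { us; tauto. }
  pose proof (CHAR M X BX) as Hc.
  pose proof HBX as HBX'. apply base_restrict in HBX'. destruct HBX' as [HBXi [HBXX HBXm]].
  split; [|split; [|split; [|split]]].
  - intros I HI. apply contract_sub; auto.
  - apply Hc; auto. split; [|split].
    + us; tauto.
    + us; tauto.
    + apply m_down with BX; auto. us; tauto.
  - intros I J HJ HIJ. apply (Hc J HM HBX) in HJ. destruct HJ as [HJE [HJX HJi]].
    apply Hc; auto. split; [|split].
    + us; auto.
    + us; auto.
    + apply m_down with (setU J BX); auto. us. intros y [Hy|Hy]; auto.
  - intros I B HI HnI HB.
    pose proof HI as HI'. apply (Hc I HM HBX) in HI'. destruct HI' as [HIE [HIX HIi]].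
    assert (HnM : ~ base M (setU I BX)).
    { intro Hb. apply HnI. apply (contract_base_of M X BX); auto. }
    pose proof (base_contract M X BX B HM HBX HB) as HBM.
    destruct (m_aug M _ _ HM HIi HnM HBM) as [x [Hx1 [Hx2 Hx3]]].
    assert (Bx : B x). { destruct Hx1 as [H|H]; auto. exfalso; apply Hx2; right; auto. }
    exists x; split; auto. split. { intro; apply Hx2; left; auto. }
    pose proof (proj1 HB) as HBi. apply (Hc B HM HBX) in HBi. destruct HBi as [HBE [HBX0 _]].
    apply Hc; auto. split; [|split].
    + us. intros y [Hy|Hy]; auto. subst; auto.
    + us. intros y [Hy|Hy]; auto. subst; auto.
    + apply m_down with (setU (setU I BX) (set1 x)); auto. us. tauto.
  - intros I Z HI HIZ HZ.
    pose proof HI as HI'. apply (Hc I HM HBX) in HI'. destruct HI' as [HIE [HIX HIi]].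
    destruct (m_max M (setU I BX) (setU Z BX) HM HIi) as [J [HJ [HIJ [HJZ Hmax]]]].
    { us. intros y [Hy|Hy]; auto. }
    { us. intros y [Hy|Hy]. apply HZ in Hy. apply gc in Hy. tauto. exact (m_ground M BX HM HBXi y Hy). }
    exists (fun y => J y /\ ~ X y).
    assert (HJ' : indep (contract M X) (fun y => J y /\ ~ X y)).
    { apply Hc; auto. split; [|split].
      - us. intros y [Jy _]. exact (m_ground M J HM HJ y Jy).
      - us; tauto.
      - apply m_down with J; auto. us. intros y [[Jy _]|Hy]; auto. }
    split; auto. split; [|split].
    + us. intros y Iy. split; auto.
    + us. intros y [Jy nXy]. destruct (HJZ y Jy) as [H|H]; auto. exfalso; apply nXy; auto.
    + intros J' HJ'' HsJ' HJ'Z y Hy.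
      pose proof HJ'' as H2. apply (Hc J' HM HBX) in H2. destruct H2 as [HJ'E [HJ'X HJ'i]].
      split; [|apply HJ'X; auto].
      apply (Hmax (setU J' BX) HJ'i).
      * us. intros z Jz. destruct (classic (X z)) as [Xz|nXz].
        -- right. destruct (HJZ z Jz) as [H|H]; auto. apply HZ in H. apply gc in H. tauto.
        -- left. apply HsJ'. split; auto.
      * us. intros z [Hz|Hz]; auto.
      * left; exact Hy.
Qed.
Theorem mainTheorem9 (T : Type) (M N : mdata T) (I B : set T) :
  is_matroid M -> is_matroid N -> ground M = ground N ->
  indep M I -> indep N I ->
  common_bases (contract M I) (contract N I)
               (wave_union (contract M I) (contract N I)) B ->
  nice_feasible M N (setU I B).
Proof.
  intros HM HN HE HIM HIN [HBW HBN].
  pose proof (MATC M I HM) as HM'.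
  pose proof (MATC N I HN) as HN'.
  pose proof (fun J => CHAR M I I J HM (self_base M I HM HIM)) as CM'.
  pose proof (fun J => CHAR N I I J HN (self_base N I HN HIN)) as CN'.
  set (W := wave_union (contract M I) (contract N I)) in *.
  apply base_restrict in HBW. destruct HBW as [HBi [HBWs HBWm]].
  pose proof HBi as HBi'. apply CM' in HBi'. destruct HBi' as [HBE [HBI HBIi]].
  assert (HWg : forall x, W x -> ground M x /\ ~ I x).
  { intros x [W0 [[HW0 _] Hx]]. apply HW0 in Hx. apply gc in Hx. exact Hx. }
  set (AW := setD (ground (contract N I)) W).
  destruct (ext_restrict (contract N I) set0 AW HN' (m_empty _ HN')) as [DW [HDW _]]. { us; tauto. }
  assert (HBgen : forall D', base (restrict (contract N I) AW) D' -> indep N (setU (setU B D') I)).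
  { intros D' HD'. pose proof (proj1 HBN) as H. unfold contract_to in H.
    apply (CHAR (contract N I) AW D' B HN' HD') in H. destruct H as [_ [_ H]].
    apply CN' in H. exact (proj2 (proj2 H)). }
  pose proof (HBgen DW HDW) as HBDW.
  pose proof HDW as HDW'. apply base_restrict in HDW'. destruct HDW' as [HDWi [HDWA HDWm]].
  assert (HSM : indep M (setU I B)). { apply m_down with (setU B I); auto. us; tauto. }
  assert (HSN : indep N (setU I B)). { apply m_down with (setU (setU B DW) I); auto. us; tauto. }
  pose proof (fun J => CHAR M (setU I B) (setU I B) J HM (self_base M (setU I B) HM HSM)) as CM''.
  pose proof (fun J => CHAR N (setU I B) (setU I B) J HN (self_base N (setU I B) HN HSN)) as CN''.
  pose proof (MATC M (setU I B) HM) as HM''.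
  pose proof (MATC N (setU I B) HN) as HN''.
  assert (KEY : forall W2, wave (contract M (setU I B)) (contract N (setU I B)) W2 -> forall x, W2 x -> W x).
  { intros W2 [HW2g [B2 [HB2 HB2N]]] x Hx.
    apply base_restrict in HB2. destruct HB2 as [HB2i [HB2W HB2m]].
    pose proof HB2i as H. apply CM'' in H. destruct H as [HB2E [HB2S HB2Si]].
    assert (HW2' : forall y, W2 y -> ground M y /\ ~ (setU I B) y). { intros y Hy. apply HW2g in Hy. apply gc in Hy. exact Hy. }
    change (exists W0, wave (contract M I) (contract N I) W0 /\ W0 x).
    exists (setU W W2). split; [|right; exact Hx].
    split.
    { us. intros y [Hy|Hy]; apply gc.
      - apply HWg; auto.
      - destruct (HW2' y Hy) as [H1 H2]. split; auto. }
    exists (setU B B2). split.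
    - apply base_restrict. split; [|split].
      + apply CM'. split; [|split].
        * us. intros y [Hy|Hy]; auto.
        * us. intros y [Hy|Hy]; auto. intro; apply (HB2S y Hy); left; auto.
        * apply m_down with (setU B2 (setU I B)); auto. us; tauto.
      + us. intros y [Hy|Hy]; auto.
      + intros J HJ HJsub HBJ.
        pose proof HJ as H. apply CM' in H. destruct H as [HJE [HJI HJIi]].
        assert (HJW : forall y, J y -> W y -> B y).
        { intros y Jy Wy. apply (HBWm (fun z => J z /\ W z)).
          - apply m_down with J; auto. us; tauto.
          - us; tauto.
          - us. intros z Bz; split; auto.
          - split; auto. }
        intros y Jy. destruct (classic (B y)) as [By|nBy]; [left; auto|right].
        apply (HB2m (fun z => J z /\ ~ B z)).
        * apply CM''. split; [|split].
          -- us. intros z [Jz _]; auto.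
          -- us. intros z [Jz nBz] [Iz|Bz]; auto. apply (HJI z Jz Iz).
          -- apply m_down with (setU J I); auto. us. intros z [[Jz _]|[Iz|Bz]]; auto.
        * us. intros z [Jz nBz]. destruct (HJsub z Jz) as [Wz|W2z]; auto.
          exfalso; apply nBz; auto.
        * us. intros z B2z; split; auto. intro Bz. apply (HB2S z B2z). right; auto.
        * split; auto.
    - unfold contract_to.
      set (A' := setD (ground (contract N I)) (setU W W2)).
      destruct (ext_restrict (contract N I) set0 A' HN' (m_empty _ HN')) as [D [HD _]]. { us; tauto. }
      pose proof HD as HD'. apply base_restrict in HD'. destruct HD' as [HDi [HDA HDm]].
      pose proof HDi as H. apply CN' in H. destruct H as [HDE [HDI HDIi]].
      assert (HDW2 : forall y, D y -> ~ W y /\ ~ W2 y).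
      { intros y Dy. apply HDA in Dy. unfold A' in Dy. us. tauto. }
      set (Z := setD (ground (contract N (setU I B))) W2).
      assert (HDi'' : indep (contract N (setU I B)) D).
      { apply CN''. split; [|split]; auto.
        - us. intros z Dz [Iz|Bz]. apply (HDI z Dz Iz). apply (proj1 (HDW2 z Dz)). apply HBWs; auto.
        - destruct (ext_restrict (contract N I) D AW HN' HDi) as [DW' [HDW' HDDW']].
          { us. intros y Dy. apply HDA in Dy. unfold A' in Dy. us. unfold AW; us.
            split; [tauto|]. tauto. }
          apply m_down with (setU (setU B DW') I); auto.
          us. intros z [Dz|[Iz|Bz]]; auto. }
      destruct (ext_restrict (contract N (setU I B)) D Z HN'' HDi'') as [D2 [HD2 HDD2]].
      { us. intros y Dy. unfold Z; us. split.
        - apply gc. split; [apply HDE; auto|]. intros [Iy|By]. apply (HDI y Dy Iy).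
          apply (proj1 (HDW2 y Dy)). apply HBWs; auto.
        - apply HDW2; auto. }
      unfold contract_to in HB2N. fold Z in HB2N.
      apply (CHAR (contract N (setU I B)) Z D2 B2 HN'' HD2) in HB2N. destruct HB2N as [_ [_ H2]].
      apply CN'' in H2. destruct H2 as [_ [_ H2]].
      apply (CHAR (contract N I) A' D (setU B B2) HN' HD). split; [|split].
      + us. intros y [By|B2y]; apply gc.
        * split; [rewrite <- HE; auto| auto].
        * destruct (HW2' y (HB2W y B2y)) as [H3 H4]. split; [rewrite <- HE; auto|]. intro; apply H4; left; auto.
      + unfold A'. us. intros y [By|B2y] [_ Hy]; apply Hy; [left; apply HBWs|right; apply HB2W]; auto.
      + apply CN'. split; [|split].
        * us. intros y [[By|B2y]|Dy]. rewrite <- HE; auto. rewrite <- HE; apply HB2E; auto. auto.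
        * us. intros y [[By|B2y]|Dy]; auto. intro Iy. apply (HB2S y B2y). left; auto.
        * apply m_down with (setU (setU B2 D2) (setU I B)); auto. us. intros y [[[H|H]|H]|H]; auto. }
  assert (HBW' : forall y, B y -> W y) by (intros y By; apply HBWs; auto).
  pose proof HDWi as HDWi'. apply CN' in HDWi'. destruct HDWi' as [HDWE [HDWI _]].
  assert (HDWnW : forall y, DW y -> ~ W y).
  { intros y Dy. apply HDWA in Dy. unfold AW in Dy. us. tauto. }
  assert (RZ : forall W2, (forall x, W2 x -> W x) -> forall J,
            indep (contract (contract N (setU I B)) (setD (ground (contract N (setU I B))) W2)) J ->
            forall x, J x -> False).
  { intros W2 HW2 J HJ x Jx.
    set (Z := setD (ground (contract N (setU I B))) W2) in *.
    assert (HDWi'' : indep (contract N (setU I B)) DW).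
    { apply CN''. split; [|split]; auto.
      - us. intros z Dz [Iz|Bz]. apply (HDWI z Dz Iz). apply (HDWnW z Dz). apply HBW'; auto.
      - apply m_down with (setU (setU B DW) I); auto. us. intros z [Dz|[Iz|Bz]]; auto. }
    destruct (ext_restrict (contract N (setU I B)) DW Z HN'' HDWi'') as [D2 [HD2 HDD2]].
    { us. intros y Dy. unfold Z; us. split.
      - apply gc. split; [apply HDWE; auto|]. intros [Iy|By]. apply (HDWI y Dy Iy).
        apply (HDWnW y Dy). apply HBW'; auto.
      - intro W2y. apply (HDWnW y Dy). apply HW2; auto. }
    apply (CHAR (contract N (setU I B)) Z D2 J HN'' HD2) in HJ. destruct HJ as [HJg [HJZ HJi]].
    apply CN'' in HJi. destruct HJi as [_ [_ HJi]].
    pose proof (HJg x Jx) as Hgx. apply gc in Hgx. destruct Hgx as [Ex nSx].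
    assert (Wx : W x).
    { apply HW2. apply NNPP; intro nW2x. apply (HJZ x Jx). unfold Z; us. split; auto.
      }
    apply nSx. right. apply ((proj2 HBN) (setU B (set1 x))); [| us; auto | us; auto].
    unfold contract_to. apply (CHAR (contract N I) AW DW _ HN' HDW). split; [|split].
    + us. intros y [By|Hy]; apply gc.
      * split; [rewrite <- HE; auto| auto].
      * subst y. split; auto.
    + unfold AW; us. intros y [By|Hy] [_ Hy2]; apply Hy2. apply HBW'; auto. subst; auto.
    + apply CN'. split; [|split].
      * us. intros y [[By|Hy]|Dy]. rewrite <- HE; auto. subst; auto. auto.
      * us. intros y [[By|Hy]|Dy]; auto. subst. intro; apply nSx; left; auto.
      * apply m_down with (setU (setU J D2) (setU I B)); auto.
        us. intros y [[[By|Hy]|Dy]|Iy]; auto. subst; auto. }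
  unfold nice_feasible, feasible. split; [split; [auto|split; [auto|]]|].
  - intros W2 HW2. exists set0. split.
    + split. apply m_empty, MATC; auto.
      intros J HJ _ x Jx. exfalso. exact (RZ W2 (KEY W2 HW2) J HJ x Jx).
    + apply m_empty; auto.
  - split.
    + intros x Hx. destruct Hx as [W2 [HW2 W2x]].
      pose proof (KEY W2 (conj (proj1 HW2) (proj2 HW2)) x W2x) as Wx.
      pose proof (proj1 HW2 x W2x) as Hg. apply gc in Hg. destruct Hg as [Ex nSx].
      split. apply (proj1 HW2 x W2x).
      intro Hi. apply CM'' in Hi. destruct Hi as [_ [_ Hi]].
      apply nSx. right. apply (HBWm (setU B (set1 x))).
      * apply CM'. split; [|split].
        -- us. intros y [By|Hy]; auto. subst; auto.
        -- us. intros y [By|Hy]; auto. subst. intro; apply nSx; left; auto.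
        -- apply m_down with (setU (set1 x) (setU I B)); auto. us. intros y [[By|Hy]|Iy]; auto.
      * us. intros y [By|Hy]; auto. subst; auto.
      * us; auto.
      * us; auto.
    + split. apply m_empty, MATC; auto.
      intros J HJ _ x Jx. exfalso.
      refine (RZ (wave_union (contract M (setU I B)) (contract N (setU I B))) _ J HJ x Jx).
      intros y [W2 [HW2 Hy]]. exact (KEY W2 HW2 y Hy).
Qed.
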